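(* Let $D$ be an integral domain and $\star$ a semistar operation on $D$. Every $\widetilde{\star}$-universally catenarian domain $D$ is a $\widetilde{\star}$-stably strong S-domain.
   Context: Let $D$ be an integral domain with quotient field $K$, $\overline{\mathcal{F}}(D)$ the set of nonzero $D$-submodules of $K$. A semistar operation on $D$ is a map $\star:\overline{\mathcal{F}}(D)\to\overline{\mathcal{F}}(D)$ with $(xE)^\star=xE^\star$ for nonzero $x\in K$, $E\subseteq F\Rightarrow E^\star\subseteq F^\star$, and $E\subseteq E^\star=(E^\star)^\star$. $E^{\star_f}:=\bigcup\{F^\star:F\subseteq E\text{ nonzero finitely generated}\}$. For a semistar operation $\ast$, a nonzero ideal $I$ is a quasi-$\ast$-ideal if $I^\ast\cap D=I$; quasi-$\ast$-primes are prime quasi-$\ast$-ideals, quasi-$\ast$-maximal ideals are maximal among proper quasi-$\ast$-ideals. $E^{\widetilde\star}:=\bigcap\{ED_P:P\in\mathrm{QMax}^{\star_f}(D)\}$. For an indeterminate $X$: $\Theta:=\{Q\in\mathrm{Spec}(D[X]):Q\cap D=(0)\text{ or }(Q\cap D)^{\star_f}\subsetneq D^\star\}$, $\mathfrak S:=D[X][Y]\setminus\bigcup\{Q[Y]:Q\in\Theta\}$, and $E^{\star[X]}:=E[Y]_{\mathfrak S}\cap K(X)$ defines a semistar operation $\star[X]$ on $D[X]$, with $\widetilde\star[X]=\star[X]$; inductively $\star[n]:=(\star[X_1,\dots,X_{n-1}])[X_n]$ on $D[n]:=D[X_1,\dots,X_n]$. For a semistar operation $\ast$ on a domain $R$: $R$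 is $\ast$-catenary if for each pair $P\subset Q$ of quasi-$\ast$-primes, any two saturated chains of quasi-$\ast$-primes between them have the same finite length; $R$ is $\ast$-universally catenarian if $R[n]$ is $\ast[n]$-catenary for every $n\ge1$; $R$ is a $\ast$-strong S-domain if each pair of adjacent quasi-$\ast$-primes $P_1\subset P_2$ extends to adjacent quasi-$\ast[X]$-primes $P_1[X]\subset P_2[X]$; $R$ is a $\ast$-stably strong S-domain if $R[n]$ is a $\ast[n]$-strong S-domain for every $n\ge1$. *)

(* Defs.v *)
From HB Require Import structures.
From mathcomp Require Import all_boot all_order all_algebra.
From mathcomp Require Import boolp classical_sets.

Set Implicit Arguments.
Unset Strict Implicit.
Unset Printing Implicit Defensive.

Import GRing.Theory.
Local Open Scope ring_scope.
Local Open Scope classical_set_scope.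

(* Throughout, a domain is a subring [R : set L] of a field [L]; its
   "quotient field" is L (see [is_domain_qf]).  Subsets of L are [set L]. *)

Section Generic.
Variable L : fieldType.
Implicit Types (R E F I P Q : set L).

Definition is_subring R : Prop :=
  R 0 /\ R 1 /\ (forall x y, R x -> R y -> R (x - y)) /\
  (forall x y, R x -> R y -> R (x * y)).

Definition is_domain_qf R : Prop :=
  is_subring R /\ forall x : L, exists a b, R a /\ R b /\ b != 0 /\ x = a / b.

Definition is_frac_module R E : Prop :=
  E 0 /\ (forall x y, E x -> E y -> E (x + y)) /\
  (forall r x, R r -> E x -> E (r * x)) /\ (exists x, E x /\ x != 0).

Definition scale_set (x : L) E : set L := [set x * e | e in E].

Definition is_semistar R (st : set L -> set L) : Prop :=
  forall E F, is_frac_module R E -> is_frac_module R F ->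
    [/\ is_frac_module R (st E),
        (forall x, x != 0 -> st (scale_set x E) = scale_set x (st E)),
        (E `<=` F -> st E `<=` st F),
        E `<=` st E &
        st (st E) = st E].

Definition span R (s : seq L) : set L :=
  [set z | exists c : nat -> L, (forall i, R (c i)) /\
           z = \sum_(i < size s) c i * s`_i].

Definition starf R (st : set L -> set L) (E : set L) : set L :=
  [set z | exists s : seq L, is_frac_module R (span R s) /\
           span R s `<=` E /\ st (span R s) z].

(* nonzero ideals *)
Definition is_ideal R I : Prop := is_frac_module R I /\ I `<=` R.

(* prime ideals (the zero ideal allowed), i.e. elements of Spec(R) *)
Definition is_prime_ideal R Q : Prop :=
  Q `<=` R /\ Q 0 /\ (forall x y, Q x -> Q y -> Q (x + y)) /\
  (forall r x, R r -> Q x -> Q (r * x)) /\ ~ Q 1 /\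
  (forall a b, R a -> R b -> Q (a * b) -> Q a \/ Q b).

Definition quasi_ideal R (st : set L -> set L) I : Prop :=
  is_ideal R I /\ st I `&` R = I.

Definition quasi_prime R (st : set L -> set L) P : Prop :=
  quasi_ideal R st P /\ is_prime_ideal R P.

Definition quasi_max R (st : set L -> set L) P : Prop :=
  quasi_ideal R st P /\ P <> R /\
  (forall I, quasi_ideal R st I -> I <> R -> P `<=` I -> I = P).

(* E^{\tilde star} = \bigcap_{P in QMax^{star_f}(D)} E D_P *)
Definition stilde R (st : set L -> set L) (E : set L) : set L :=
  [set z | forall P, quasi_max R (starf R st) P ->
     exists x s, E x /\ R s /\ ~ P s /\ z = x / s].

Definition adjacent R (st : set L -> set L) P1 P2 : Prop :=
  quasi_prime R st P1 /\ quasi_prime R st P2 /\ P1 `<` P2 /\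
  ~ (exists P, quasi_prime R st P /\ P1 `<` P /\ P `<` P2).

Definition sat_chain R (st : set L -> set L) (c : nat -> set L) (n : nat) P Q
  : Prop :=
  c 0%N = P /\ c n = Q /\ (forall i, (i < n)%N -> adjacent R st (c i) (c i.+1)).

Definition catenary R (st : set L -> set L) : Prop :=
  forall P Q, quasi_prime R st P -> quasi_prime R st Q -> P `<` Q ->
  forall (c d : nat -> set L) (n m : nat),
    sat_chain R st c n P Q -> sat_chain R st d m P Q -> n = m.

End Generic.

Section PolyX.
Variable L : fieldType.
Implicit Types (R E F I P Q : set L).

Definition fracX (p : {poly L}) : {fraction {poly L}} := FracField.tofrac p.

Definition ringX R : set {fraction {poly L}} :=
  [set z | exists p : {poly L}, (forall i, R p`_i) /\ z = fracX p].

Definition extX P : set {fraction {poly L}} :=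
  [set z | exists p : {poly L}, (forall i, P p`_i) /\ z = fracX p].

Definition contr R (Q : set {fraction {poly L}}) : set L :=
  [set c | R c /\ Q (fracX c%:P)].

Definition Theta R (st : set L -> set L) (Q : set {fraction {poly L}}) : Prop :=
  is_prime_ideal (ringX R) Q /\
  (contr R Q = [set 0] \/ starf R st (contr R Q) `<` st R).

(* membership in the multiplicative set  D[X][Y] \ \bigcup_{Q in Theta} Q[Y] *)
Definition Smult R (st : set L -> set L) (s : {poly {fraction {poly L}}})
  : Prop :=
  (forall i, ringX R s`_i) /\
  (forall Q : set {fraction {poly L}}, Theta R st Q -> exists i, ~ Q s`_i).

(* E^{star[X]} = E[Y]_S \cap K(X) *)
Definition starX R (st : set L -> set L) (E : set {fraction {poly L}})
  : set {fraction {poly L}} :=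
  [set z | exists f s : {poly {fraction {poly L}}},
     (forall i, E f`_i) /\ Smult R st s /\ z%:P * s = f].

Definition strongS R (st : set L -> set L) : Prop :=
  forall P1 P2, adjacent R st P1 P2 ->
    adjacent (ringX R) (starX R st) (extX P1) (extX P2).

End PolyX.

Fixpoint Lt (K : fieldType) (n : nat) : fieldType :=
  match n with
  | 0 => K
  | m.+1 => {fraction {poly Lt K m}}
  end.

Fixpoint tower (K : fieldType) (D : set K) (st : set K -> set K) (n : nat)
  : (set (Lt K n) * (set (Lt K n) -> set (Lt K n)))%type :=
  match n return (set (Lt K n) * (set (Lt K n) -> set (Lt K n)))%type with
  | 0 => (D, st)
  | m.+1 => let p := tower D st m in (ringX p.1, starX p.1 p.2)
  end.

Definition Dn (K : fieldType) (D : set K) (st : set K -> set K) (n : nat) :=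
  (tower D st n).1.
Definition starn (K : fieldType) (D : set K) (st : set K -> set K) (n : nat) :=
  (tower D st n).2.

Arguments tower {K} D st n.
Arguments Dn {K} D st n.
Arguments starn {K} D st n.

Definition univ_catenarian (K : fieldType) (D : set K) (st : set K -> set K)
  : Prop :=
  forall n : nat, (0 < n)%N -> catenary (Dn D st n) (starn D st n).

Definition stably_strongS (K : fieldType) (D : set K) (st : set K -> set K)
  : Prop :=
  forall n : nat, (0 < n)%N -> strongS (Dn D st n) (starn D st n).

(* Main.v *)
Require Import Defs.
From HB Require Import structures.
From mathcomp Require Import all_boot all_order all_algebra.
From mathcomp Require Import boolp classical_sets.
From mathcomp Require Import zify ring lra.

Set Implicit Arguments.
Unset Strict Implicit.
Unset Printing Implicit Defensive.
Import GRing.Theory.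
Local Open Scope ring_scope.
Local Open Scope classical_set_scope.



Section Basics.
Variable F : fieldType.
Implicit Types (A E P Q : set F) (p q : {poly F}).

Definition modA A E := E 0 /\ (forall x y, E x -> E y -> E (x + y)) /\
  (forall r x, A r -> E x -> E (r * x)).

Lemma sr0 A : is_subring A -> A 0. Proof. by case. Qed.
Lemma sr1 A : is_subring A -> A 1. Proof. by case=> _ []. Qed.
Lemma srB A x y : is_subring A -> A x -> A y -> A (x - y).
Proof. by case=> _ [_ []] H _; apply: H. Qed.
Lemma srM A x y : is_subring A -> A x -> A y -> A (x * y).
Proof. by case=> _ [_ []] _ H; apply: H. Qed.
Lemma srN A x : is_subring A -> A x -> A (- x).
Proof. by move=> H Hx; rewrite -sub0r; apply: srB => //; apply: sr0. Qed.
Lemma srD A x y : is_subring A -> A x -> A y -> A (x + y).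
Proof. by move=> H Hx Hy; rewrite -[y]opprK; apply: srB => //; apply: srN. Qed.
Lemma srX A x n : is_subring A -> A x -> A (x ^+ n).
Proof. by move=> H Hx; elim: n => [|n IH]; [rewrite expr0; apply: sr1|rewrite exprS; apply: srM]. Qed.

Lemma srmod A : is_subring A -> modA A A.
Proof. by move=> H; split; [apply: sr0|split=> *; [apply: srD|apply: srM]]. Qed.

Lemma fm_mod A E : is_frac_module A E -> modA A E.
Proof. by case=> [? [? [? _]]]. Qed.

Lemma pr_mod A P : is_prime_ideal A P -> modA A P.
Proof. by case=> [_ [? [? [? _]]]]. Qed.

Lemma modN A E x : is_subring A -> modA A E -> E x -> E (- x).
Proof.
move=> HA [_ [_ HM]] Ex; rewrite -mulN1r; apply: HM => //.
by apply: srN => //; apply: sr1.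
Qed.

Lemma modB A E x y : is_subring A -> modA A E -> E x -> E y -> E (x - y).
Proof. by move=> HA HE Ex Ey; case: (HE) => [_ [HD _]]; apply: HD => //; apply: modN HE _. Qed.

Lemma modMr A E r x : modA A E -> A r -> E x -> E (x * r).
Proof. by move=> [_ [_ HM]] Ar Ex; rewrite mulrC; apply: HM. Qed.

Lemma mod_sum A E (I : Type) (s : seq I) (Pr : pred I) (G : I -> F) :
  modA A E -> (forall i, Pr i -> E (G i)) -> E (\sum_(i <- s | Pr i) G i).
Proof.
move=> [H0 [HD _]] HG; apply: (big_ind E) => //.
Qed.

Definition Cp E p := forall i, E p`_i.

Lemma Cp0 A E : modA A E -> Cp E 0.
Proof. by move=> [H0 _] i; rewrite coef0. Qed.

Lemma CpC E c : E 0 -> E c -> Cp E c%:P.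
Proof. by move=> H0 Hc i; rewrite coefC; case: (i == 0)%N. Qed.

Lemma Cp1 A : is_subring A -> Cp A 1.
Proof. by move=> H i; rewrite coef1; case: (i == 0)%N; [apply: sr1|apply: sr0]. Qed.

Lemma CpX A : is_subring A -> Cp A 'X.
Proof. by move=> H i; rewrite coefX; case: (i == 1)%N; [apply: sr1|apply: sr0]. Qed.

Lemma CpXn A n : is_subring A -> Cp A 'X^n.
Proof. by move=> H i; rewrite coefXn; case: (i == n)%N; [apply: sr1|apply: sr0]. Qed.

Lemma CpD A E p q : modA A E -> Cp E p -> Cp E q -> Cp E (p + q).
Proof. by move=> [_ [HD _]] Hp Hq i; rewrite coefD; apply: HD. Qed.

Lemma CpB A E p q : is_subring A -> modA A E -> Cp E p -> Cp E q -> Cp E (p - q).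
Proof. by move=> HA HE Hp Hq i; rewrite coefB; apply: (modB HA HE). Qed.

Lemma CpMl A E p q : modA A E -> Cp A p -> Cp E q -> Cp E (p * q).
Proof.
move=> HE Hp Hq i; rewrite coefM; case: (HE) => [H0 [HD HM]].
by apply: (big_ind E) => // j _; apply: HM.
Qed.

Lemma CpMr A E p q : modA A E -> Cp E p -> Cp A q -> Cp E (p * q).
Proof. by move=> HE Hp Hq; rewrite mulrC; apply: (CpMl HE). Qed.

Lemma CpM A p q : is_subring A -> Cp A p -> Cp A q -> Cp A (p * q).
Proof. by move=> H; apply: CpMl; apply: srmod. Qed.

Lemma CpXp A p n : is_subring A -> Cp A p -> Cp A (p ^+ n).
Proof. by move=> H Hp; elim: n => [|n IH]; [rewrite expr0; apply: Cp1|rewrite exprS; apply: CpM]. Qed.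

Lemma CpCM A E c p : modA A E -> A c -> Cp E p -> Cp E (c%:P * p).
Proof. by move=> [_ [_ HM]] Hc Hp i; rewrite coefCM; apply: HM. Qed.

Lemma Cp_poly E n (G : nat -> F) : E 0 -> (forall i, (i < n)%N -> E (G i)) ->
  Cp E (\poly_(i < n) G i).
Proof. by move=> H0 HG i; rewrite coef_poly; case: ifP => // /HG. Qed.

Lemma Cp_drop E n p : Cp E p -> Cp E (drop_poly n p).
Proof. by move=> Hp i; rewrite coef_drop_poly. Qed.

Lemma Cp_sub E E' p : E `<=` E' -> Cp E p -> Cp E' p.
Proof. by move=> H Hp i; apply: H. Qed.

Lemma decX p : p = drop_poly 1 p * 'X + (p`_0)%:P.
Proof.
rewrite -{1}(poly_take_drop 1 p) expr1 addrC; congr (_ + _).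
apply/polyP=> i; rewrite coef_take_poly coefC; case: i => //.
Qed.

End Basics.

Section Gauss.
Variable F : fieldType.
Implicit Types (A E P Q : set F) (p q : {poly F}).

Lemma pr_sub A P : is_prime_ideal A P -> P `<=` A. Proof. by case. Qed.
Lemma pr_0 A P : is_prime_ideal A P -> P 0. Proof. by case=> _ []. Qed.
Lemma pr_1 A P : is_prime_ideal A P -> ~ P 1. Proof. by case=> _ [_ [_ [_ []]]]. Qed.
Lemma pr_prime A P a b : is_prime_ideal A P -> A a -> A b -> P (a * b) -> P a \/ P b.
Proof. by case=> _ [_ [_ [_ [_ H]]]]; apply: H. Qed.

Lemma pr_X A P a n : is_subring A -> is_prime_ideal A P -> A a -> P (a ^+ n) -> P a.
Proof.
move=> HA HP Ha; elim: n => [|n IH]; first by rewrite expr0 => /(pr_1 HP).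
rewrite exprS => /(pr_prime HP Ha (srX n HA Ha)); case=> //.
Qed.

Lemma top_exists P p : P 0 -> ~ Cp P p ->
  exists i, ~ P p`_i /\ forall k, (i < k)%N -> P p`_k.
Proof.
move=> P0 nCp.
suff H : forall n, (forall k, (n <= k)%N -> P p`_k) ->
   exists i, ~ P p`_i /\ forall k, (i < k)%N -> P p`_k.
  by apply: (H (size p)) => k Hk; rewrite nth_default.
elim=> [|n IH] Hn.
  by exfalso; apply: nCp => k; apply: Hn.
case: (pselect (P p`_n)) => Pn.
  by apply: IH => k; rewrite leq_eqVlt; case/orP => [/eqP <- //|]; apply: Hn.
by exists n; split.
Qed.

Lemma top_coef A P a b i j : is_subring A -> is_prime_ideal A P ->
  Cp A a -> Cp A b -> ~ P a`_i -> ~ P b`_j ->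
  (forall k, (i < k)%N -> P a`_k) -> (forall k, (j < k)%N -> P b`_k) ->
  ~ P (a * b)`_(i + j).
Proof.
move=> HA HP Ha Hb nai nbj ta tb.
have HPm := pr_mod HP.
rewrite coefM (bigD1 (Ordinal (leq_addr j i : (i < (i + j).+1)%N))) //=.
rewrite addKn => Hs.
have Hr : P (\sum_(k < (i + j).+1 | k != Ordinal (leq_addr j i : (i < (i + j).+1)%N)) a`_k * b`_(i + j - k)).
  case: (HPm) => [H0 [HD HM]].
  apply: (big_ind P) => // k Hk.
  have : (nat_of_ord k != i) by [].
  rewrite neq_ltn; case/orP => Hki.
    apply: HM; first exact: Ha.
    apply: tb.
    have Hk2 : (k <= i + j)%N by rewrite -ltnS.
    by rewrite ltn_subRL; move: Hki Hk2; clear; lia.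
  by apply: (modMr HPm (Hb _)); apply: ta.
have : P (a`_i * b`_j) by rewrite -[_ * _](addrK (\sum_(k < (i + j).+1 | k != Ordinal (leq_addr j i : (i < (i + j).+1)%N)) a`_k * b`_(i + j - k))); apply: (modB HA HPm).
by case/(pr_prime HP (Ha _) (Hb _)).
Qed.

Lemma gauss A P a b : is_subring A -> is_prime_ideal A P ->
  Cp A a -> Cp A b -> Cp P (a * b) -> Cp P a \/ Cp P b.
Proof.
move=> HA HP Ha Hb Hab.
case: (pselect (Cp P a)) => Pa; [by left|right].
case: (pselect (Cp P b)) => // Pb.
have [i [nai ta]] := top_exists (pr_0 HP) Pa.
have [j [nbj tb]] := top_exists (pr_0 HP) Pb.
by exfalso; apply: (top_coef HA HP Ha Hb nai nbj ta tb); apply: Hab.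
Qed.

Lemma gauss_ex A P a b : is_subring A -> is_prime_ideal A P ->
  Cp A a -> Cp A b -> (exists i, ~ P a`_i) -> (exists i, ~ P b`_i) ->
  exists i, ~ P (a * b)`_i.
Proof.
move=> HA HP Ha Hb [i Hi] [j Hj].
apply: contrapT => H.
have Hab : Cp P (a * b) by move=> k; apply: contrapT => Hk; apply: H; exists k.
by case: (gauss HA HP Ha Hb Hab) => [/(_ i)|/(_ j)].
Qed.

End Gauss.

Section FracX.
Variable L : fieldType.
Implicit Types (R E P : set L) (Q : set {fraction {poly L}}) (p q : {poly L}).

Lemma fracX_inj : injective (@fracX L).
Proof. by move=> p q H; apply/eqP; rewrite -tofrac_eq; apply/eqP. Qed.
Lemma fracX0 : fracX (0 : {poly L}) = 0. Proof. exact: tofrac0. Qed.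
Lemma fracX1 : fracX (1 : {poly L}) = 1. Proof. exact: tofrac1. Qed.
Lemma fracXD p q : fracX (p + q) = fracX p + fracX q. Proof. exact: tofracD. Qed.
Lemma fracXB p q : fracX (p - q) = fracX p - fracX q. Proof. exact: tofracB. Qed.
Lemma fracXM p q : fracX (p * q) = fracX p * fracX q. Proof. exact: tofracM. Qed.
Lemma fracXXn p n : fracX (p ^+ n) = fracX p ^+ n. Proof. exact: tofracXn. Qed.
Lemma fracX_eq0 p : (fracX p == 0) = (p == 0). Proof. exact: tofrac_eq0. Qed.

Lemma ringXP R p : ringX R (fracX p) <-> Cp R p.
Proof.
split; last by move=> H; exists p.
by case=> q [Hq /fracX_inj ->].
Qed.

Lemma ringX_sub R : is_subring R -> is_subring (ringX R).
Proof.
move=> HR; split; first by rewrite -fracX0; apply/ringXP; apply: (Cp0 (srmod HR)).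
split; first by rewrite -fracX1; apply/ringXP; apply: Cp1.
split.
  move=> _ _ [p [Hp ->]] [q [Hq ->]]; rewrite -fracXB; apply/ringXP.
  by apply: (CpB HR (srmod HR)).
move=> _ _ [p [Hp ->]] [q [Hq ->]]; rewrite -fracXM; apply/ringXP.
by apply: CpM.
Qed.

Lemma ringXC R c : R c -> is_subring R -> ringX R (fracX c%:P).
Proof. by move=> Hc HR; apply/ringXP; apply: CpC => //; apply: sr0. Qed.

Lemma ringX_fm R : is_subring R -> is_frac_module (ringX R) (ringX R).
Proof.
move=> HR; have HX := ringX_sub HR; case: (srmod HX) => [H0 [HD HM]].
split=> //; split=> //; split=> //; exists 1; split; first exact: sr1.
exact: oner_neq0.
Qed.

Lemma R_fm R : is_subring R -> is_frac_module R R.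
Proof.
move=> HR; case: (srmod HR) => [H0 [HD HM]].
split=> //; split=> //; split=> //; exists 1; split; first exact: sr1.
exact: oner_neq0.
Qed.

Lemma extXP P p : extX P (fracX p) <-> Cp P p.
Proof.
split; last by move=> H; exists p.
by case=> q [Hq /fracX_inj ->].
Qed.

Lemma extX_prime R P : is_subring R -> is_prime_ideal R P ->
  is_prime_ideal (ringX R) (extX P).
Proof.
move=> HR HP; have HPm := pr_mod HP.
split; first by move=> _ [p [Hp ->]]; apply/ringXP; apply: Cp_sub (pr_sub HP) Hp.
split; first by rewrite -fracX0; apply/extXP; apply: (Cp0 HPm).
split; first by move=> _ _ [p [Hp ->]] [q [Hq ->]]; rewrite -fracXD; apply/extXP; apply: (CpD HPm).
split.
  move=> _ _ [p [Hp ->]] [q [Hq ->]]; rewrite -fracXM; apply/extXP.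
  by apply: (CpMl HPm).
split.
  rewrite -fracX1 => /extXP /(_ 0%N); rewrite coef1 /=; exact: (pr_1 HP).
move=> _ _ [p [Hp ->]] [q [Hq ->]]; rewrite -fracXM => /extXP Hpq.
by case: (gauss HR HP Hp Hq Hpq) => H; [left|right]; apply/extXP.
Qed.

Lemma contr_extX R P : P `<=` R -> P 0 -> contr R (extX P) = P.
Proof.
move=> HPR P0; apply/seteqP; split=> c.
  by case=> _ /extXP /(_ 0%N); rewrite coefC.
move=> Pc; split; first exact: HPR.
by apply/extXP; apply: CpC.
Qed.

Definition PX R P : set {fraction {poly L}} :=
  [set z | exists p, Cp R p /\ P p`_0 /\ z = fracX p].

Lemma PXP R P p : PX R P (fracX p) <-> Cp R p /\ P p`_0.
Proof.
split; last by move=> [H1 H2]; exists p.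
by case=> q [Hq [H0 /fracX_inj ->]].
Qed.

Lemma PX_prime R P : is_subring R -> is_prime_ideal R P ->
  is_prime_ideal (ringX R) (PX R P).
Proof.
move=> HR HP; have HPm := pr_mod HP; have HRm := srmod HR.
split; first by move=> _ [p [Hp [_ ->]]]; apply/ringXP.
split; first by rewrite -fracX0; apply/PXP; split; [apply: (Cp0 HRm)|rewrite coef0; exact: (pr_0 HP)].
split.
  move=> _ _ [p [Hp [Hp0 ->]]] [q [Hq [Hq0 ->]]]; rewrite -fracXD; apply/PXP.
  split; first by apply: (CpD HRm).
  by rewrite coefD; case: HPm => [_ [HD _]]; apply: HD.
split.
  move=> _ _ [p [Hp ->]] [q [Hq [Hq0 ->]]]; rewrite -fracXM; apply/PXP.
  split; first by apply: CpM.
  by rewrite coef0M; case: HPm => [_ [_ HM]]; apply: HM.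
split.
  by rewrite -fracX1 => /PXP [_]; rewrite coef1 /=; exact: (pr_1 HP).
move=> _ _ [p [Hp ->]] [q [Hq ->]]; rewrite -fracXM => /PXP [_].
rewrite coef0M => /(pr_prime HP (Hp _) (Hq _)).
by case=> H; [left|right]; apply/PXP.
Qed.

Lemma contr_PX R P : is_subring R -> P `<=` R -> contr R (PX R P) = P.
Proof.
move=> HR HPR; apply/seteqP; split=> c.
  by case=> _ /PXP [_]; rewrite coefC.
move=> Pc; split; first exact: HPR.
apply/PXP; split; first by apply: CpC => //; [apply: sr0|apply: HPR].
by rewrite coefC.
Qed.

Lemma contr_mod R Q : is_subring R -> modA (ringX R) Q -> modA R (contr R Q).
Proof.
move=> HR [H0 [HD HM]]; split.
  by split; [apply: sr0|rewrite fracX0].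
split.
  move=> x y [Rx Qx] [Ry Qy]; split; first exact: srD.
  by rewrite polyCD fracXD; apply: HD.
move=> r x Rr [Rx Qx]; split; first exact: srM.
by rewrite polyCM fracXM; apply: HM => //; apply: ringXC.
Qed.

Lemma contr_prime R Q : is_subring R -> is_prime_ideal (ringX R) Q ->
  is_prime_ideal R (contr R Q).
Proof.
move=> HR HQ; have [H0 [HD HM]] := contr_mod HR (pr_mod HQ).
split; first by move=> x [].
split=> //; split=> //; split=> //; split.
  by case=> _; rewrite fracX1; apply: (pr_1 HQ).
move=> a b Ra Rb [_]; rewrite polyCM fracXM.
case/(pr_prime HQ (ringXC Ra HR) (ringXC Rb HR)) => H; [left|right]; by split.
Qed.

Lemma contr_sub R Q Q' : Q `<=` Q' -> contr R Q `<=` contr R Q'.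
Proof. by move=> H c [Rc Qc]; split=> //; apply: H. Qed.

Lemma contr_ext R P Q : is_subring R -> modA (ringX R) Q ->
  P `<=` contr R Q -> extX P `<=` Q.
Proof.
move=> HR HQ HP _ [p [Hp ->]].
rewrite -[p]coefK poly_def /fracX rmorph_sum.
case: (HQ) => [H0 [HD HM]]; apply: (big_ind Q) => // i _.
rewrite -mul_polyC rmorphM mulrC; apply: HM.
  by change (ringX R (fracX ('X^i))); apply/ringXP; apply: CpXn.
by case: (HP _ (Hp i)).
Qed.

End FracX.

Section Span.
Variable F : fieldType.
Implicit Types (A J : set F) (s : seq F).

Lemma span_mem A s i : is_subring A -> (i < size s)%N -> Defs.span A s s`_i.
Proof.
move=> HA Hi; exists (fun k => if k == i then 1 else 0); split.
  by move=> k; case: ifP => _; [apply: sr1|apply: sr0].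
rewrite (bigD1 (Ordinal Hi)) //= eqxx mul1r big1 ?addr0 // => k Hk.
have -> : (nat_of_ord k == i) = false by apply/negbTE; move: Hk; apply: contra => /eqP Hk; apply/eqP/val_inj.
by rewrite mul0r.
Qed.

Lemma span_sub A J s : modA A J -> (forall i, (i < size s)%N -> J s`_i) ->
  Defs.span A s `<=` J.
Proof.
move=> [H0 [HD HM]] Hs _ [c [Hc ->]].
by apply: (big_ind J) => // i _; apply: HM => //; apply: Hs.
Qed.

Lemma span_mod A s : is_subring A -> modA A (Defs.span A s).
Proof.
move=> HA; split.
  exists (fun _ => 0); split; first by move=> _; apply: sr0.
  by rewrite big1 // => i _; rewrite mul0r.
split.
  move=> _ _ [c1 [Hc1 ->]] [c2 [Hc2 ->]]; exists (fun k => c1 k + c2 k); split.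
    by move=> k; apply: srD.
  by rewrite -big_split /=; apply: eq_bigr => i _; rewrite mulrDl.
move=> r _ Hr [c [Hc ->]]; exists (fun k => r * c k); split.
  by move=> k; apply: srM.
by rewrite mulr_sumr; apply: eq_bigr => i _; rewrite mulrA.
Qed.

Lemma span_fm A s x : is_subring A -> Defs.span A s x -> x != 0 ->
  is_frac_module A (Defs.span A s).
Proof.
move=> HA Hx nx; have [H0 [HD HM]] := span_mod s HA.
by split=> //; split=> //; split=> //; exists x.
Qed.

End Span.

Definition good (F0 : fieldType) (R : set F0) (st : set F0 -> set F0) :=
  is_subring R /\ forall E, is_frac_module R E ->
     [/\ is_frac_module R (st E), E `<=` st E, st (st E) `<=` st E &
     (forall F, is_frac_module R F -> E `<=` F -> st E `<=` st F)].

Lemma ring_id1 (T : comRingType) (p x c s1 s2 : T) :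
  (p * x + c) * (s1 * s2) = (p * s1) * (x * s2) + (c * s2) * s1.
Proof. ring. Qed.
Lemma ring_id2 (T : comRingType) (a b s1 s2 : T) :
  (a + b) * (s1 * s2) = a * s1 * s2 + b * s2 * s1.
Proof. ring. Qed.

Lemma polyCM_assoc (T : comRingType) (r z : T) (s : {poly T}) :
  (r * z)%:P * s = r%:P * (z%:P * s).
Proof. by rewrite polyCM mulrA. Qed.

Section Good.
Variable L : fieldType.
Implicit Types (R E P : set L) (Q : set {fraction {poly L}}) (p q : {poly L}).


Lemma Smult1 R st : is_subring R -> Smult R st 1.
Proof.
move=> HR; split; first exact: (Cp1 (ringX_sub HR)).
by move=> Q [HQ _]; exists 0%N; rewrite coef1 /=; apply: (pr_1 HQ).
Qed.

Lemma SmultM R st s1 s2 : is_subring R -> Smult R st s1 -> Smult R st s2 ->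
  Smult R st (s1 * s2).
Proof.
move=> HR [H1 T1] [H2 T2]; have HX := ringX_sub HR; split.
  exact: CpM.
move=> Q HT; case: (HT) => [HQ _].
exact: (gauss_ex HX HQ H1 H2 (T1 _ HT) (T2 _ HT)).
Qed.

Lemma starX_ext R st Q : is_subring R -> Q 0 -> Q `<=` starX R st Q.
Proof.
move=> HR Q0 z Qz; exists z%:P, 1; split; first by apply: CpC.
by split; [apply: Smult1|rewrite mulr1].
Qed.

Lemma starX_idem_aux R st (E' : set {fraction {poly L}}) f : is_subring R -> modA (ringX R) E' ->
  Cp (starX R st E') f -> exists s, Smult R st s /\ Cp E' (f * s).
Proof.
move=> HR HE; have HX := ringX_sub HR.
elim/poly_ind: f => [|p c IH] Hf.
  by exists 1; split; [apply: Smult1|rewrite mul0r; apply: (Cp0 HE)].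
have Hp : Cp (starX R st E') p.
  by move=> i; have := Hf i.+1; rewrite coefD coefMX coefC /= addr0.
have Hc : starX R st E' c.
  by have := Hf 0%N; rewrite coefD coefMX coefC /= add0r.
have [s1 [S1 C1]] := IH Hp.
have [g [s2 [Cg [S2 Eg]]]] := Hc.
exists (s1 * s2); split; first exact: SmultM.
rewrite ring_id1.
rewrite Eg; apply: (CpD HE); apply: (CpMr HE) => //.
  by apply: CpM => //; [apply: CpX|case: S2].
by case: S1.
Qed.

Lemma starX_good R st : is_subring R -> good (ringX R) (starX R st).
Proof.
move=> HR; have HX := ringX_sub HR; split; first exact: ringX_sub.
move=> E HE; have HEm := fm_mod HE; case: (HEm) => [E0 [ED EM]].
have Hext := starX_ext st HR E0.
split.
- split; first by apply: Hext.
  split.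
    move=> z1 z2 [f1 [s1 [C1 [S1 E1]]]] [f2 [s2 [C2 [S2 E2]]]].
    exists (f1 * s2 + f2 * s1), (s1 * s2); split.
      by apply: (CpD HEm); apply: (CpMr HEm) => //; [case: S2|case: S1].
    by split; [apply: SmultM|rewrite -E1 -E2 polyCD ring_id2].
  split.
    move=> r z Hr [f [s [Cf [Ss Ef]]]]; exists (r%:P * f), s; split.
      by apply: (CpCM HEm).
    split; first exact: Ss.
    by rewrite -Ef; apply: polyCM_assoc.
  by case: HE => [_ [_ [_ [x [Ex nx]]]]]; exists x; split=> //; apply: Hext.
- exact: Hext.
- move=> z [f [s [Cf [Ss Ef]]]].
  have [s' [S' C']] := starX_idem_aux HR HEm Cf.
  exists (f * s'), (s * s'); split=> //; split; first exact: SmultM.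
  by rewrite mulrA Ef.
- by move=> F' _ HEF z [f [s [Cf [Ss Ef]]]]; exists f, s; split=> // i; apply: HEF.
Qed.

Lemma theta_sub R st Q : Theta R st Q -> starX R st Q `&` ringX R `<=` Q.
Proof.
move=> HT z [[f [s [Cf [[Cs Ts] Ef]]]] Rz].
have [i ni] := Ts Q HT; case: HT => [HQ _].
have := Cf i; rewrite -Ef coefCM.
by case/(pr_prime HQ Rz (Cs i)).
Qed.

Lemma theta_quasi R st Q : is_subring R -> Theta R st Q ->
  (exists x, Q x /\ x != 0) -> quasi_prime (ringX R) (starX R st) Q.
Proof.
move=> HR HT Hnz; have HQ : is_prime_ideal (ringX R) Q by case: HT.
split=> //; split.
  split; last exact: (pr_sub HQ).
  by have [Q0 [QD QM]] := pr_mod HQ; split=> //; split=> //; split.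
apply/seteqP; split; first exact: theta_sub.
move=> z Qz; split; last exact: (pr_sub HQ).
by apply: starX_ext => //; apply: (pr_0 HQ).
Qed.

Lemma starf_mono R st E E2 : E `<=` E2 -> starf R st E `<=` starf R st E2.
Proof. by move=> H z [s [Hs [Hsub Hz]]]; exists s; split=> //; split=> // x /Hsub /H. Qed.

Lemma key_K R st (p : seq L) : good R st -> is_frac_module R (Defs.span R p) ->
  st (Defs.span R p) 1 -> st R `<=` st (Defs.span R p).
Proof.
move=> [HR Hg] Hp H1.
have [Hfm Hext Hid Hmon] := Hg _ Hp.
have [_ _ _ HmonR] := Hg _ (R_fm HR).
move=> z Hz; apply: Hid; apply: (HmonR _ Hfm) => //.
move=> r Rr; rewrite -[r]mulr1; case: Hfm => [_ [_ [HM _]]]; by apply: HM.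
Qed.

Lemma nonzero_of_ne R (I : set L) : I 0 -> I <> [set 0] -> exists x, I x /\ x != 0.
Proof.
move=> I0 HI; apply: contrapT => H; apply: HI; apply/seteqP; split=> x.
  move=> Ix; rewrite /set1 /=; apply: contrapT => nx; apply: H; exists x; split=> //.
  by apply/eqP.
by move=> x0; rewrite /set1 /= in x0; rewrite x0.
Qed.

Lemma factB R st Q : good R st -> quasi_prime (ringX R) (starX R st) Q ->
  Theta R st Q.
Proof.
move=> Hgood HQq; have [HR Hg] := Hgood.
have HQ : is_prime_ideal (ringX R) Q by case: HQq.
have Qeq : starX R st Q `&` ringX R = Q by case: HQq => [[_ ->]].
split=> //.
case: (pselect (contr R Q = [set 0])) => Hc; [by left|right].
set I := contr R Q.
have HIm := contr_mod HR (pr_mod HQ).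
have [x [Ix nx]] := nonzero_of_ne R (proj1 HIm) Hc.
have HIR : I `<=` R by move=> y [].
have HRfm := R_fm HR.
split.
  move=> z [s [Hs [Hsub Hz]]].
  have [_ _ _ Hmon] := Hg _ Hs.
  by apply: (Hmon R) => // y /Hsub /HIR.
move=> Hsup.
have [_ Hext _ _] := Hg _ HRfm.
have := Hsup 1 (Hext 1 (sr1 HR)).
move=> [p [Hp [Hsub H1]]].
have Kp := key_K Hgood Hp H1.
have pR : forall i, (i < size p)%N -> I p`_i.
  by move=> i Hi; apply: Hsub; apply: span_mem.
set s := \poly_(i < size p) fracX (p`_i)%:P.
have Ss : Smult R st s.
  split.
    apply: Cp_poly; first exact: (sr0 (ringX_sub HR)).
    by move=> i Hi; apply: ringXC => //; apply: HIR; apply: pR.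
  move=> Q2 HT2; apply: contrapT => Hall.
  have HQ2 : is_prime_ideal (ringX R) Q2 by case: HT2.
  have Hsp : Defs.span R p `<=` contr R Q2.
    apply: span_sub; first exact: (contr_mod HR (pr_mod HQ2)).
    move=> i Hi; split; first by apply: HIR; apply: pR.
    apply: contrapT => nQ; apply: Hall; exists i.
    by rewrite coef_poly Hi.
  case: HT2 => [_ [H0|[_ Hnsup]]].
    case: Hp => [_ [_ [_ [y [Hy ny]]]]].
    by move: (Hsp _ Hy); rewrite H0 => /= Hy0; move: ny; rewrite Hy0 eqxx.
  apply: Hnsup => z /Kp Hz; exists p; split=> //.
have : starX R st Q 1.
  exists s, s; split; last by split=> //; rewrite mul1r.
  move=> i; rewrite coef_poly; case: ifP => Hi.
    by case: (pR i Hi).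
  exact: (pr_0 HQ).
move=> H1Q; apply: (pr_1 HQ); rewrite -Qeq; split=> //.
exact: (sr1 (ringX_sub HR)).
Qed.

Lemma tilde R st (P P2 : set {fraction {poly L}}) : good R st -> is_prime_ideal (ringX R) P ->
  (exists x, P x /\ x != 0) -> quasi_prime (ringX R) (starX R st) P2 ->
  P `<=` P2 -> quasi_prime (ringX R) (starX R st) P.
Proof.
move=> Hgood HP Hnz HP2 Hsub; have [HR Hg] := Hgood.
apply: theta_quasi => //.
have [_ HT2] := factB Hgood HP2.
split=> //.
case: HT2 => [H0|[Hs Hns]].
  left; apply/seteqP; split=> x.
    by move=> /(contr_sub Hsub); rewrite H0.
  by move=> ->; split; [apply: sr0|rewrite fracX0; apply: (pr_0 HP)].
right; split.
  by move=> z /(starf_mono (R:=R) (st:=st) (contr_sub Hsub)) /Hs.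
by move=> Hsup; apply: Hns => z /Hsup; apply: starf_mono; apply: contr_sub.
Qed.

End Good.

Section Starf.
Variable L : fieldType.
Variable D : set L.
Variable st : set L -> set L.
Hypothesis HD : is_subring D.
Hypothesis Hst : is_semistar D st.
Implicit Types (E M N P : set L) (s t : seq L).

Lemma st_fm E : is_frac_module D E -> is_frac_module D (st E).
Proof. by move=> H; case: (Hst H H). Qed.
Lemma st_ext E : is_frac_module D E -> E `<=` st E.
Proof. by move=> H; case: (Hst H H). Qed.
Lemma st_idem E : is_frac_module D E -> st (st E) = st E.
Proof. by move=> H; case: (Hst H H). Qed.
Lemma st_mono E F : is_frac_module D E -> is_frac_module D F -> E `<=` F -> st E `<=` st F.
Proof. by move=> H1 H2; case: (Hst H1 H2). Qed.
Lemma st_scale x E : is_frac_module D E -> x != 0 -> st (scale_set x E) = scale_set x (st E).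
Proof. by move=> H; case: (Hst H H) => _ H2 _ _ _; apply: H2. Qed.



Lemma span_catl s1 s2 : Defs.span D s1 `<=` Defs.span D (s1 ++ s2).
Proof.
apply: span_sub; first exact: span_mod.
move=> i Hi; have -> : s1`_i = (s1 ++ s2)`_i by rewrite nth_cat Hi.
by apply: span_mem => //; rewrite size_cat ltn_addr.
Qed.

Lemma span_catr s1 s2 : Defs.span D s2 `<=` Defs.span D (s1 ++ s2).
Proof.
apply: span_sub; first exact: span_mod.
move=> i Hi; have -> : s2`_i = (s1 ++ s2)`_(size s1 + i) by rewrite nth_cat ltnNge leq_addr /= addKn.
by apply: span_mem => //; rewrite size_cat ltn_add2l.
Qed.

Lemma fm_nz E : is_frac_module D E -> exists x, E x /\ x != 0.
Proof. by case=> [_ [_ [_ H]]]. Qed.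

Lemma span_fm_sub s E : is_frac_module D (Defs.span D s) -> Defs.span D s `<=` E ->
  is_frac_module D E -> forall i, (i < size s)%N -> E s`_i.
Proof. by move=> _ Hsub _ i Hi; apply: Hsub; apply: span_mem. Qed.

Lemma single_span E x : is_frac_module D E -> E x -> x != 0 ->
  [/\ is_frac_module D (Defs.span D [:: x]), Defs.span D [:: x] `<=` E &
      Defs.span D [:: x] x].
Proof.
move=> HE Ex nx.
have Hx : Defs.span D [:: x] x by apply: (span_mem (s:=[:: x]) (i:=0)).
split=> //; first exact: (span_fm HD Hx nx).
by apply: span_sub; [exact: fm_mod|case=> //].
Qed.

Lemma span_join E s1 s2 : is_frac_module D (Defs.span D s1) ->
  Defs.span D s1 `<=` E -> Defs.span D s2 `<=` E -> modA D E ->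
  is_frac_module D (Defs.span D (s1 ++ s2)) /\ Defs.span D (s1 ++ s2) `<=` E.
Proof.
move=> H1 S1 S2 HE; split.
  have [y [Hy ny]] := fm_nz H1.
  by apply: (span_fm HD (@span_catl s1 s2 y Hy) ny).
apply: span_sub => // i; rewrite size_cat nth_cat; case: ifP => Hi Hi2.
  by apply: S1; apply: span_mem.
apply: S2; apply: span_mem => //.
move/negbT: Hi; rewrite -leqNgt => Hi.
by rewrite ltn_subLR.
Qed.

Lemma starf_fm E : is_frac_module D E -> is_frac_module D (starf D st E).
Proof.
move=> HE; have HEm := fm_mod HE; have [x [Ex nx]] := fm_nz HE.
have [Fx Sx Xx] := single_span HE Ex nx.
have Z : starf D st E 0.
  by exists [:: x]; split=> //; split=> //; case: (st_fm Fx).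
split=> //; split.
  move=> z1 z2 [s1 [F1 [S1 Z1]]] [s2 [F2 [S2 Z2]]].
  have [F12 S12] := span_join F1 S1 S2 HEm.
  exists (s1 ++ s2); split=> //; split=> //.
  case: (st_fm F12) => [_ [HA _]]; apply: HA.
    by apply: (st_mono F1 F12 (@span_catl s1 s2)).
  by have F2' : is_frac_module D (Defs.span D s2) by []; apply: (st_mono F2' F12 (@span_catr s1 s2)).
split.
  move=> r z Hr [s [Fs [Ss Zs]]]; exists s; split=> //; split=> //.
  by case: (st_fm Fs) => [_ [_ [HM _]]]; apply: HM.
exists x; split=> //; exists [:: x]; split=> //; split=> //.
exact: (st_ext Fx).
Qed.

Lemma starf_ext E : is_frac_module D E -> E `<=` starf D st E.
Proof.
move=> HE y Ey; case: (eqVneq y 0) => [->|ny].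
  by case: (starf_fm HE).
have [Fy Sy Yy] := single_span HE Ey ny.
by exists [:: y]; split=> //; split=> //; apply: st_ext.
Qed.

Lemma starf_aux E s : is_frac_module D E ->
  (forall i, (i < size s)%N -> starf D st E s`_i) ->
  exists t, [/\ is_frac_module D (Defs.span D t), Defs.span D t `<=` E &
     forall i, (i < size s)%N -> st (Defs.span D t) s`_i].
Proof.
move=> HE; have HEm := fm_mod HE; elim: s => [|a s IH] Hs.
  have [x [Ex nx]] := fm_nz HE; have [Fx Sx _] := single_span HE Ex nx.
  by exists [:: x]; split.
have [t1 [F1 S1 H1]] : exists t, [/\ is_frac_module D (Defs.span D t), Defs.span D t `<=` E &
     forall i, (i < size s)%N -> st (Defs.span D t) s`_i].
  by apply: IH => i Hi; apply: (Hs i.+1).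
have [t0 [F0 [S0 H0]]] := Hs 0%N isT.
have [F01 S01] := span_join F0 S0 S1 HEm.
exists (t0 ++ t1); split=> //; case=> [_|i Hi] /=.
  exact: (st_mono F0 F01 (@span_catl t0 t1)).
by apply: (st_mono F1 F01 (@span_catr t0 t1)); apply: H1.
Qed.

Lemma starf_idem E : is_frac_module D E -> starf D st (starf D st E) `<=` starf D st E.
Proof.
move=> HE z [s [Fs [Ss Zs]]].
have [t [Ft St Ht]] := starf_aux HE (fun i Hi => Ss _ (span_mem HD Hi)).
exists t; split=> //; split=> //.
have Hsub : Defs.span D s `<=` st (Defs.span D t).
  by apply: span_sub => //; apply: fm_mod; apply: st_fm.
by rewrite -(st_idem Ft); apply: (st_mono Fs (st_fm Ft) Hsub).
Qed.

Lemma span_map_scale b s : Defs.span D (map (fun y => b * y) s) = scale_set b (Defs.span D s).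
Proof.
apply/seteqP; split=> z.
  move=> [c [Hc ->]]; exists (\sum_(i < size s) c i * s`_i); first by exists c.
  rewrite mulr_sumr; move: c Hc; rewrite size_map => c Hc.
  apply: eq_bigr => i _; rewrite (nth_map 0) //; by rewrite mulrCA.
move=> [y [c [Hc ->]] <-]; exists c; split=> //.
rewrite mulr_sumr size_map; apply: eq_bigr => i _; rewrite (nth_map 0) //.
by rewrite mulrCA.
Qed.

Lemma starf_scale E E2 b z : is_frac_module D E -> b != 0 ->
  scale_set b E `<=` E2 -> starf D st E z -> starf D st E2 (b * z).
Proof.
move=> HE nb Hsc [s [Fs [Ss Zs]]].
have [y [Hy ny]] := fm_nz Fs.
have Hy' : Defs.span D (map (fun y => b * y) s) (b * y).
  by rewrite span_map_scale; exists y.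
have Fs' := span_fm HD Hy' (mulf_neq0 nb ny).
exists (map (fun y => b * y) s); split=> //; split.
  by rewrite span_map_scale => _ [w Hw <-]; apply: Hsc; exists w => //; apply: Ss.
by rewrite span_map_scale st_scale //; exists z.
Qed.

Lemma qmax_prime M : quasi_max D (starf D st) M -> is_prime_ideal D M.
Proof.
move=> [[[HMfm HMD] HMq] [HMne HMmax]].
have HMm := fm_mod HMfm; have [M0 [MD MM]] := HMm.
have M1 : ~ M 1.
  move=> M1; apply: HMne; apply/seteqP; split=> // r Dr.
  by rewrite -[r]mulr1; apply: MM.
split=> //; split=> //; split=> //; split=> //; split=> //.
move=> a b Da Db Mab.
case: (pselect (M a)) => Ma; [by left|right].
case: (eqVneq b 0) => [->//|nb].
have na : a != 0 by apply/eqP => a0; apply: Ma; rewrite a0.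
set N := [set z | exists m r, M m /\ D r /\ z = m + a * r].
have HN : is_frac_module D N.
  split; first by exists 0, 0; split=> //; split; [apply: (sr0 HD)|rewrite mulr0 addr0].
  split.
    move=> _ _ [m1 [r1 [Hm1 [Hr1 ->]]]] [m2 [r2 [Hm2 [Hr2 ->]]]].
    exists (m1 + m2), (r1 + r2); split; first exact: MD.
    by split; [apply: (srD HD)|rewrite mulrDr; ring].
  split.
    move=> r _ Dr [m [r1 [Hm [Hr1 ->]]]]; exists (r * m), (r * r1); split; first exact: MM.
    by split; [apply: (srM HD)|ring].
  exists a; split=> //; exists 0, 1; split=> //; split; [apply: (sr1 HD)|by rewrite mulr1 add0r].
have HsN := starf_fm HN.
set J := starf D st N `&` D.
have HJfm : is_frac_module D J.
  have [S0 [SD SM]] := fm_mod HsN.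
  split; first by split=> //; apply: (sr0 HD).
  split; first by move=> x y [Sx Dx] [Sy Dy]; split; [apply: SD|apply: (srD HD)].
  split; first by move=> r x Dr [Sx Dx]; split; [apply: SM|apply: (srM HD)].
  exists a; split=> //; split=> //; apply: starf_ext => //.
  by exists 0, 1; split=> //; split; [apply: (sr1 HD)|rewrite mulr1 add0r].
have HJq : quasi_ideal D (starf D st) J.
  split; first by split=> // x [].
  apply/seteqP; split.
    move=> x [Hx Dx]; split=> //.
    apply: (starf_idem HN); apply: (starf_mono (R:=D) (st:=st) _ Hx).
    by move=> y [].
  by move=> x Jx; split; [apply: starf_ext|case: Jx].
have MJ : M `<=` J.
  move=> m Hm; split; last exact: HMD.
  by apply: starf_ext => //; exists m, 0; split=> //; split; [apply: (sr0 HD)|rewrite mulr0 addr0].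
have JD : J = D.
  apply: contrapT => HJ; apply: Ma.
  rewrite -(HMmax J HJq HJ MJ); split; last exact: Da.
  by apply: starf_ext => //; exists 0, 1; split=> //; split; [apply: (sr1 HD)|rewrite mulr1 add0r].
have J1 : J 1 by rewrite JD; apply: (sr1 HD).
have Hb : starf D st M (b * 1).
  apply: (starf_scale HN nb _ (proj1 J1)).
  move=> _ [w [m [r [Hm [Hr ->]]]] <-].
  rewrite mulrDr; apply: MD; first by apply: MM.
  have -> : b * (a * r) = r * (a * b) by ring.
  by apply: MM.
rewrite -HMq; split; [by rewrite mulr1 in Hb|exact: Db].
Qed.

Lemma stilde_good : good D (stilde D st).
Proof.
split=> // E HE; have HEm := fm_mod HE; have [E0 [ED EM]] := HEm.
have Hext : E `<=` stilde D st E.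
  move=> x Ex P HP; have HPp := qmax_prime HP.
  exists x, 1; split=> //; split; first exact: (sr1 HD).
  by split; [apply: (pr_1 HPp)|rewrite divr1].
split=> //.
- split; first by apply: Hext.
  split.
    move=> z1 z2 H1 H2 P HP; have HPp := qmax_prime HP.
    have [x1 [s1 [Ex1 [Ds1 [Ps1 ->]]]]] := H1 P HP.
    have [x2 [s2 [Ex2 [Ds2 [Ps2 ->]]]]] := H2 P HP.
    have ns1 : s1 != 0 by apply/eqP => s0; apply: Ps1; rewrite s0; apply: (pr_0 HPp).
    have ns2 : s2 != 0 by apply/eqP => s0; apply: Ps2; rewrite s0; apply: (pr_0 HPp).
    exists (x1 * s2 + x2 * s1), (s1 * s2); split.
      by apply: ED; apply: (modMr HEm).
    split; first exact: (srM HD).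
    split; first by case/(pr_prime HPp Ds1 Ds2).
    by rewrite addf_div.
  split.
    move=> r z Dr Hz P HP; have [x [s [Ex [Ds [Ps ->]]]]] := Hz P HP.
    by exists (r * x), s; split; [apply: EM|split=> //; split=> //; rewrite mulrA].
  by have [x [Ex nx]] := fm_nz HE; exists x; split=> //; apply: Hext.
- move=> z Hz P HP; have HPp := qmax_prime HP.
  have [y [s [Hy [Ds [Ps ->]]]]] := Hz P HP.
  have [x [t [Ex [Dt [Pt ->]]]]] := Hy P HP.
  exists x, (t * s); split=> //; split; first exact: (srM HD).
  split; first by case/(pr_prime HPp Dt Ds).
  by rewrite invfM mulrA.
- move=> F' _ HEF z Hz P HP; have [x [s [Ex [Ds [Ps ->]]]]] := Hz P HP.
  by exists x, s; split=> //; apply: HEF.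
Qed.

End Starf.

Lemma min_ex (Pn : nat -> Prop) : (exists n, Pn n) -> exists n, Pn n /\ forall m, Pn m -> (n <= m)%N.
Proof.
move=> H.
have H' : exists n, (fun n => `[< Pn n >]) n by case: H => n Hn; exists n; apply/asboolP.
case: (ex_minnP H') => n /asboolP Hn Hmin; exists n; split=> // m Hm.
by apply: Hmin; apply/asboolP.
Qed.

Lemma pdiv_ring (T : comRingType) (C G LG XM Fp H Rr : T) k :
  C ^+ k * (C * G - LG * XM * Fp) = H * Fp + Rr ->
  C ^+ k.+1 * G = (H + C ^+ k * LG * XM) * Fp + Rr.
Proof.
move=> E.
have -> : C ^+ k.+1 * G = C ^+ k * (C * G - LG * XM * Fp) + C ^+ k * LG * XM * Fp.
  by rewrite exprSr; ring.
by rewrite E; ring.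
Qed.

Lemma modMl (F : fieldType) (A E : set F) r x : modA A E -> A r -> E x -> E (r * x).
Proof. by case=> [_ [_ H]]; apply: H. Qed.

Section Upper.
Variable L : fieldType.
Variable R : set L.
Hypothesis HR : is_subring R.
Implicit Types (P : set L) (A B Q : set {fraction {poly L}}) (f g h p r : {poly L}).

Lemma trunc P f : is_prime_ideal R P -> Cp R f -> ~ Cp P f ->
  exists g, [/\ Cp R g, Cp P (f - g), ~ P (lead_coef g) & (size g <= size f)%N].
Proof.
move=> HP Hf nf; have [i [ni ti]] := top_exists (pr_0 HP) nf.
have fi0 : f`_i != 0 by apply/eqP => E; apply: ni; rewrite E; apply: (pr_0 HP).
exists (\poly_(k < i.+1) f`_k); split.
- by apply: Cp_poly; [apply: (sr0 HR)|move=> k _; apply: Hf].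
- move=> k; rewrite coefB coef_poly; case: ifP => Hk.
    by rewrite subrr; apply: (pr_0 HP).
  by rewrite subr0; apply: ti; rewrite ltnNge -ltnS Hk.
- by rewrite lead_coef_poly.
- apply: leq_trans (size_poly _ _) _.
  rewrite ltnNge; apply/negP => Hs; move: fi0; rewrite nth_default //.
  by rewrite eqxx.
Qed.

Lemma pdiv f g : Cp R f -> f != 0 -> Cp R g ->
  exists k h r, [/\ Cp R h, Cp R r, (size r < size f)%N &
     (lead_coef f)%:P ^+ k * g = h * f + r].
Proof.
move=> Hf nf Hg0; set c := lead_coef f.
have Rc : R c by rewrite /c lead_coefE; apply: Hf.
have sf : (0 < size f)%N by rewrite size_poly_gt0.
suff H : forall n g, (size g <= n)%N -> Cp R g -> exists k h r, [/\ Cp R h, Cp R r, (size r < size f)%N &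
     c%:P ^+ k * g = h * f + r] by apply: (H (size g)).
clear Hg0 g.
elim=> [|n IH] g Hn Hg.
  exists 0%N, 0, g; split=> //; first by apply: (Cp0 (srmod HR)).
    by move: Hn; rewrite leqn0 => /eqP ->.
  by rewrite expr0 mul1r mul0r add0r.
case: (ltnP (size g) (size f)) => Hgf.
  exists 0%N, 0, g; split=> //; first by apply: (Cp0 (srmod HR)).
  by rewrite expr0 mul1r mul0r add0r.
set m := (size g - size f)%N.
set g' := c%:P * g - (lead_coef g)%:P * 'X^m * f.
have Hg' : Cp R g'.
  apply: (CpB HR (srmod HR)); first by apply: CpM => //; apply: CpC; [apply: (sr0 HR)|].
  apply: CpM => //; apply: CpM => //; last by apply: CpXn.
  by apply: CpC; [apply: (sr0 HR)|rewrite lead_coefE; apply: Hg].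
have Hsz : (size g' <= (size g).-1)%N.
  apply/leq_sizeP => j Hj.
  rewrite /g' coefB coefCM -mulrA coefCM coefXnM.
  case: (ltnP j m) => Hjm.
    by move: Hjm Hj Hgf sf; rewrite /m; clear; lia.
  case: (ltnP j (size g)) => Hjg.
    have Ej : j = (size g).-1 by move: Hjg Hj; clear; lia.
    have Ejm : (j - m)%N = (size f).-1 by rewrite Ej /m; move: Hgf sf; clear; lia.
    by rewrite Ejm -lead_coefE Ej -lead_coefE /c mulrC subrr.
  rewrite (nth_default 0 Hjg) mulr0.
  rewrite (nth_default 0) ?mulr0 ?subrr //.
  rewrite /m; move: Hjg Hgf; clear; move: (size g) (size f) => a b; lia.
have [k [h [r [Hh Hr Hrs E]]]] : exists k h r, [/\ Cp R h, Cp R r, (size r < size f)%N &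
     c%:P ^+ k * g' = h * f + r].
  apply: IH => //; apply: leq_trans Hsz _.
  by move: Hn Hgf sf; clear; lia.
exists k.+1, (h + c%:P ^+ k * (lead_coef g)%:P * 'X^m), r; split=> //.
  apply: (CpD (srmod HR)) => //; apply: CpM => //; last by apply: CpXn.
  apply: CpM => //; first by apply: CpXp => //; apply: CpC => //; apply: (sr0 HR).
  by apply: CpC; [apply: (sr0 HR)|rewrite lead_coefE; apply: Hg].
by apply: pdiv_ring.
Qed.

Lemma upper P A B : is_prime_ideal R P -> is_prime_ideal (ringX R) A ->
  is_prime_ideal (ringX R) B -> A `<=` B -> extX P `<=` A -> ~ (A `<=` extX P) ->
  contr R B `<=` P -> B `<=` A.
Proof.
move=> HP HA HB AB PA nAP BP.
have HX := ringX_sub HR.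
have HAm := pr_mod HA; have HBm := pr_mod HB; have HPm := pr_mod HP.
have tr : forall Q f, is_prime_ideal (ringX R) Q -> extX P `<=` Q -> Cp R f ->
    Q (fracX f) -> ~ Cp P f ->
    exists g, [/\ Cp R g, Q (fracX g), ~ P (lead_coef g) & (size g <= size f)%N].
  move=> Q f HQ PQ Hf Qf nf; have [g [Hg Hfg ng sg]] := trunc HP Hf nf.
  exists g; split=> //.
  have -> : g = f - (f - g) by rewrite opprB addrC subrK.
  rewrite fracXB; apply: (modB HX (pr_mod HQ) Qf); apply: PQ.
  by apply/extXP.
have [z [Az nz]] : exists z, A z /\ ~ extX P z.
  by apply: contrapT => H; apply: nAP => z Az; apply: contrapT => nz; apply: H; exists z.
have [f0 [Hf0 Ef0]] := pr_sub HA Az.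
have nf0 : ~ Cp P f0 by move=> H; apply: nz; rewrite Ef0; apply/extXP.
rewrite Ef0 in Az.
have [g0 [Hg0 Ag0 ng0 _]] := tr A f0 HA PA Hf0 Az nf0.
have [d [[f [[Hf [Bf nf]] Ef]] dmin]] := min_ex (ex_intro
  (fun n => exists g, (Cp R g /\ B (fracX g) /\ ~ P (lead_coef g)) /\ size g = n)
  (size g0) (ex_intro _ g0 (conj (conj Hg0 (conj (AB _ Ag0) ng0)) erefl))).
set c := lead_coef f.
have Rc : R c by rewrite /c lead_coefE; apply: Hf.
have nc : c != 0 by apply/eqP => E; apply: nf; rewrite -/c E; apply: (pr_0 HP).
have fnz : f != 0 by rewrite -lead_coef_eq0.
have d2 : (2 <= d)%N.
  rewrite -Ef ltnNge; apply/negP => /size1_polyC Ef1.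
  have Bf0 : contr R B f`_0.
    by split; [apply: Hf|rewrite -Ef1].
  apply: nf; rewrite -/c.
  have -> : c = f`_0 by rewrite /c {1}Ef1 lead_coefC.
  by apply: BP.
have divB : forall g, Cp R g -> B (fracX g) -> exists k h r,
    [/\ Cp R h, Cp P r, (size r < d)%N & c%:P ^+ k * g = h * f + r].
  move=> g Hg Bg; have [k [h [r [Hh Hr Hrs E]]]] := pdiv Hf fnz Hg.
  exists k, h, r; split=> //; last by rewrite -Ef.
  apply: contrapT => nr.
  have Br : B (fracX r).
    have -> : r = c%:P ^+ k * g - h * f by rewrite E addrC addKr.
    rewrite fracXB !fracXM; apply: (modB HX HBm).
      apply: (modMl HBm) => //.
      by rewrite fracXXn; apply: srX => //; apply: ringXC.
    by apply: (modMl HBm) => //; apply/ringXP.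
  have [g' [Hg' Bg' ng' sg']] := tr B r HB (fun x Hx => AB _ (PA _ Hx)) Hr Br nr.
  have := dmin _ (ex_intro _ g' (conj (conj Hg' (conj Bg' ng')) erefl)).
  by move: sg' Hrs; rewrite -Ef; clear; lia.
have cX : forall Q k, is_prime_ideal (ringX R) Q -> Q (fracX (c%:P ^+ k)) -> contr R Q c.
  move=> Q k HQ; rewrite fracXXn => /(pr_X HX HQ (ringXC Rc HR)) Hc; by split.
have fA : A (fracX f).
  have [e [[g [[Hg [Ag ng]] Eg]] emin]] := min_ex (ex_intro
    (fun n => exists g, (Cp R g /\ A (fracX g) /\ ~ P (lead_coef g)) /\ size g = n)
    (size g0) (ex_intro _ g0 (conj (conj Hg0 (conj Ag0 ng0)) erefl))).
  have de : (d <= e)%N by rewrite -Eg; apply: dmin; exists g; split=> //; split=> //; split=> //; apply: AB.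
  have [k [h [r [Hh Pr Hrs E]]]] := divB g Hg (AB _ Ag).
  have Ahf : A (fracX h * fracX f).
    rewrite -fracXM; have -> : h * f = c%:P ^+ k * g - r by rewrite E addrK.
    rewrite fracXB fracXM; apply: (modB HX HAm); last by apply: PA; apply/extXP.
    by apply: (modMl HAm) => //; rewrite fracXXn; apply: srX => //; apply: ringXC.
  case: (pr_prime HA (proj2 (ringXP R h) Hh) (proj2 (ringXP R f) Hf) Ahf) => // Ah.
  exfalso.
  have gnz : g != 0 by apply/eqP => E0; apply: ng; rewrite E0 lead_coef0; apply: (pr_0 HP).
  case: (pselect (Cp P h)) => Ph.
    have Pc : Cp P (c%:P ^+ k * g).
      rewrite E; apply: (CpD HPm) => //; exact: (CpMr HPm Ph Hf).
    have := Pc (size g).-1; rewrite -rmorphXn coefCM -lead_coefE.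
    have Rlg : R (lead_coef g) by rewrite lead_coefE; apply: Hg.
    case/(pr_prime HP (srX k HR Rc) Rlg) => //.
    by move/(pr_X HR HP Rc); apply: nf.
  have [h' [Hh' Ah' nh' sh']] := tr A h HA PA Hh Ah Ph.
  have eh : (e <= size h)%N by apply: leq_trans (emin _ _) sh'; exists h'; split=> //.
  have hnz : h != 0 by apply/eqP => E0; apply: Ph; rewrite E0; apply: (Cp0 HPm).
  have Shf : size (h * f) = (size h + d).-1 by rewrite size_mul // Ef.
  have Shf2 : (size (h * f)%R <= e)%N.
    have -> : h * f = c%:P ^+ k * g - r by rewrite E addrK.
    apply: leq_trans (size_polyD _ _) _; rewrite size_polyN.
    rewrite -rmorphXn size_Cmul ?expf_neq0 // Eg geq_max leqnn /=.
    by apply: ltnW; apply: leq_trans Hrs de.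
  rewrite Shf in Shf2; move: Shf2 eh d2; clear; move: (size h) => a; lia.
move=> w Bz; have [g [Hg Ez]] := pr_sub HB Bz; rewrite Ez in Bz *.
have [k [h [r [Hh Pr Hrs E]]]] := divB g Hg Bz.
have Rck : ringX R (fracX (c%:P ^+ k)).
  by rewrite fracXXn; apply: srX => //; apply: ringXC.
have Acg : A (fracX (c%:P ^+ k) * fracX g).
  rewrite -fracXM E fracXD fracXM; apply: (proj1 (proj2 HAm)).
    by apply: (modMl HAm) => //; apply/ringXP.
  by apply: PA; apply/extXP.
case: (pr_prime HA Rck (proj2 (ringXP R g) Hg) Acg) => // Ac.
exfalso; apply: nf; apply: BP; apply: (contr_sub AB); exact: (cX A k HA Ac).
Qed.

End Upper.

Section XLemmas.
Variable L : fieldType.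
Variable R : set L.
Hypothesis HR : is_subring R.
Implicit Types (P : set L) (Q : set {fraction {poly L}}) (f g p : {poly L}).

Lemma Xmem Q f : modA (ringX R) Q -> Q (fracX 'X) -> Cp R f ->
  (Q (fracX f) <-> contr R Q f`_0).
Proof.
move=> HQ QX Hf; have HX := ringX_sub HR.
have Q1 : Q (fracX (drop_poly 1 f * 'X)).
  by rewrite fracXM; apply: (modMl HQ) => //; apply/ringXP; apply: Cp_drop.
split.
  move=> Qf; split; first exact: Hf.
  have -> : (f`_0)%:P = f - drop_poly 1 f * 'X by rewrite {2}(decX f) addrC addKr.
  by rewrite fracXB; apply: (modB HX HQ).
move=> [_ Qf0]; rewrite (decX f) fracXD.
by case: HQ => [_ [HD _]]; apply: HD.
Qed.

Lemma Xsat P Q : is_prime_ideal R P -> is_prime_ideal (ringX R) Q ->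
  extX P `<=` Q -> Q `<=` PX R P -> ~ (Q `<=` extX P) -> PX R P `<=` Q.
Proof.
move=> HP HQ PQ QPX nQP; have HX := ringX_sub HR; have HQm := pr_mod HQ.
have [z [Qz nz]] : exists z, Q z /\ ~ extX P z.
  by apply: contrapT => H; apply: nQP => z Qz; apply: contrapT => nz; apply: H; exists z.
have [f [Hf Ez]] := pr_sub HQ Qz.
have nf : ~ Cp P f by move=> H; apply: nz; rewrite Ez; apply/extXP.
rewrite Ez in Qz.
have QX : Q (fracX 'X).
  suff H : forall n f, (size f <= n)%N -> Cp R f -> Q (fracX f) -> ~ Cp P f -> Q (fracX 'X).
    exact: (H (size f) f (leqnn _) Hf Qz nf).
  clear z nz Ez f Hf nf Qz.
  elim=> [|n IH] f Hn Hf Qf nf.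
    by exfalso; apply: nf; move: Hn; rewrite leqn0 size_poly_eq0 => /eqP ->; apply: (Cp0 (pr_mod HP)).
  have [_ Pf0] := proj1 (PXP R P f) (QPX _ Qf).
  have Q1 : Q (fracX (drop_poly 1 f) * fracX 'X).
    rewrite -fracXM; have -> : drop_poly 1 f * 'X = f - (f`_0)%:P by rewrite {2}(decX f) addrK.
    rewrite fracXB; apply: (modB HX HQm Qf); apply: PQ; apply/extXP.
    by apply: CpC => //; apply: (pr_0 HP).
  case: (pr_prime HQ (proj2 (ringXP R _) (Cp_drop 1 Hf)) (proj2 (ringXP R _) (CpX HR)) Q1) => // Qd.
  apply: (IH (drop_poly 1 f)) => //.
  - by rewrite size_drop_poly; move: Hn; clear; move: (size f) => a; lia.
  - exact: Cp_drop.
  - move=> Hd; apply: nf; case=> [//|i]; have := Hd i; rewrite coef_drop_poly addn1 //.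
move=> _ [p [Hp [Pp0 ->]]].
apply/(Xmem HQm QX Hp); split; first exact: Hp.
by apply: PQ; apply/extXP; apply: CpC => //; apply: (pr_0 HP).
Qed.

End XLemmas.

Lemma qp_prime (F : fieldType) (R : set F) st P : quasi_prime R st P -> is_prime_ideal R P.
Proof. by case. Qed.
Lemma qp_nz (F : fieldType) (R : set F) st P : quasi_prime R st P -> exists x, P x /\ x != 0.
Proof. by case=> [[[[_ [_ [_ H]]] _] _] _]. Qed.


Section Main0.
Variable L : fieldType.
Implicit Types (R P : set L) (Q : set {fraction {poly L}}).

Lemma sfP R st P : good R st -> quasi_prime R st P -> starf R st P `<` st R.
Proof.
move=> [HR Hg] HPq; have HP := qp_prime HPq.
have HPfm : is_frac_module R P by case: HPq => [[[]]].
have Peq : st P `&` R = P by case: HPq => [[_ ->]].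
have HRfm := R_fm HR.
split.
  move=> z [s [Hs [Hsub Hz]]]; have [_ _ _ Hmon] := Hg _ Hs.
  by apply: (Hmon R) => // y /Hsub /(pr_sub HP).
move=> Hsup; have [_ Hext _ _] := Hg _ HRfm.
have [s [Hs [Hsub H1]]] := Hsup 1 (Hext 1 (sr1 HR)).
have [_ _ _ Hmon] := Hg _ Hs.
apply: (pr_1 HP); rewrite -Peq; split; last exact: sr1.
exact: (Hmon P HPfm Hsub).
Qed.

Lemma fracXC_nz (x : L) : x != 0 -> fracX x%:P != 0.
Proof. by move=> nx; rewrite fracX_eq0 polyC_eq0. Qed.

Lemma qX R st P : good R st -> quasi_prime R st P ->
  quasi_prime (ringX R) (starX R st) (extX P).
Proof.
move=> Hg HPq; have HR := proj1 Hg; have HP := qp_prime HPq.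
apply: theta_quasi => //.
  split; first exact: extX_prime.
  by right; rewrite (contr_extX (pr_sub HP) (pr_0 HP)); exact: (sfP Hg HPq).
have [x [Px nx]] := qp_nz HPq.
exists (fracX x%:P); split; last exact: fracXC_nz.
by apply/extXP; apply: CpC => //; apply: (pr_0 HP).
Qed.

Lemma qPX R st P : good R st -> quasi_prime R st P ->
  quasi_prime (ringX R) (starX R st) (PX R P).
Proof.
move=> Hg HPq; have HR := proj1 Hg; have HP := qp_prime HPq.
apply: theta_quasi => //.
  split; first exact: PX_prime.
  by right; rewrite (contr_PX HR (pr_sub HP)); exact: (sfP Hg HPq).
exists (fracX 'X); split; last by rewrite fracX_eq0 polyX_eq0.
apply/PXP; split; first exact: CpX.
by rewrite coefX /=; apply: (pr_0 HP).
Qed.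

Lemma not_sub_ex (T : Type) (A B : set T) : ~ (A `<=` B) -> exists x, A x /\ ~ B x.
Proof. by move=> H; apply: contrapT => H2; apply: H => x Ax; apply: contrapT => nB; apply: H2; exists x. Qed.

Lemma extX_sub_PX R P : P `<=` R -> extX P `<=` PX R P.
Proof.
by move=> HPR _ [p [Hp ->]]; apply/PXP; split; [apply: Cp_sub HPR Hp|apply: Hp].
Qed.

Lemma adjX R st P : good R st -> quasi_prime R st P ->
  adjacent (ringX R) (starX R st) (extX P) (PX R P).
Proof.
move=> Hg HPq; have HR := proj1 Hg; have HP := qp_prime HPq.
split; first exact: qX.
split; first exact: qPX.
split.
  split; first exact: extX_sub_PX (pr_sub HP).
  move=> H; have := H (fracX 'X).
  have HX : PX R P (fracX 'X).
    by apply/PXP; split; [apply: CpX|rewrite coefX /=; apply: (pr_0 HP)].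
  move=> /(_ HX) /extXP /(_ 1%N); rewrite coefX /=; exact: (pr_1 HP).
move=> [Q [HQq [[H1 nH1] [H2 nH2]]]].
apply: nH2; exact: (Xsat HR HP (qp_prime HQq) H1 H2 nH1).
Qed.

End Main0.

Section Main.
Variable L : fieldType.
Variable R' : set L.
Variable st' : set L -> set L.
Hypothesis Hg' : good R' st'.
Let R := ringX R'.
Let st := starX R' st'.
Let T := starX R st.
Let Hg : good R st := starX_good st' (proj1 Hg').
Let HR : is_subring R := proj1 Hg.
Hypothesis Hcat : catenary (ringX R) T.

Section Fixed.
Variables P1 P2 : set {fraction {poly L}}.
Hypothesis HP1q : quasi_prime R st P1.
Hypothesis HP2q : quasi_prime R st P2.
Hypothesis P12 : P1 `<` P2.
Hypothesis nomid : ~ (exists P, quasi_prime R st P /\ P1 `<` P /\ P `<` P2).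

Let HP1 := qp_prime HP1q.
Let HP2 := qp_prime HP2q.

Lemma between P : is_prime_ideal R P -> P1 `<=` P -> P `<=` P2 -> P = P1 \/ P = P2.
Proof.
move=> HP S1 S2.
case: (pselect (P = P1)) => E1; [by left|].
case: (pselect (P = P2)) => E2; [by right|].
exfalso; apply: nomid; exists P; split.
  apply: (tilde Hg' HP _ HP2q S2).
  by have [x [Px nx]] := qp_nz HP1q; exists x; split=> //; apply: S1.
split; split=> // H; [apply: E1|apply: E2]; apply/seteqP; split=> //.
Qed.

Lemma contr_between Q : is_prime_ideal (ringX R) Q ->
  extX P1 `<=` Q -> Q `<=` extX P2 -> contr R Q = P1 \/ contr R Q = P2.
Proof.
move=> HQ S1 S2; apply: between.
- exact: contr_prime.
- by rewrite -{1}(contr_extX (pr_sub HP1) (pr_0 HP1)); apply: contr_sub.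
- by rewrite -(contr_extX (pr_sub HP2) (pr_0 HP2)); apply: contr_sub.
Qed.

Lemma ext_adj : adjacent (ringX R) T (extX P1) (extX P2).
Proof.
have HX := ringX_sub HR.
have S12 : P1 `<=` P2 := properW P12.
have [x [P2x nP1x]] := not_sub_ex (proj2 P12).
have HP1R := pr_sub HP1; have HP2R := pr_sub HP2.
have qE1 := qX Hg HP1q; have qE2 := qX Hg HP2q.
have qPX1 := qPX Hg HP1q; have qPX2 := qPX Hg HP2q.
split=> //; split=> //.
split.
  split; first by move=> _ [p [Hp ->]]; apply/extXP; apply: Cp_sub S12 Hp.
  move=> H; apply: nP1x.
  have : extX P2 (fracX x%:P) by apply/extXP; apply: CpC => //; apply: (pr_0 HP2).
  by move=> /H /extXP /(_ 0%N); rewrite coefC.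
move=> [Q [HQq [Q1 Q2]]].
have HQ := qp_prime HQq.
case: (contr_between HQ (properW Q1) (properW Q2)) => Ec; last first.
  apply: (proj2 Q2); apply: (contr_ext HR (pr_mod HQ)).
  by rewrite Ec.
have adj1 : adjacent (ringX R) T (extX P1) Q.
  split=> //; split=> //; split=> //.
  move=> [Q' [HQ'q [A1 A2]]].
  apply: (proj2 A2); apply: (upper HR HP1 (qp_prime HQ'q) HQ (properW A2) (properW A1) (proj2 A1)).
  by rewrite Ec.
have adj2 : adjacent (ringX R) T Q (extX P2).
  split=> //; split=> //; split=> //.
  move=> [Q' [HQ'q [A1 A2]]].
  have HQ' := qp_prime HQ'q.
  have S1' : extX P1 `<=` Q' := fun z Hz => properW A1 (properW Q1 Hz).
  case: (contr_between HQ' S1' (properW A2)) => Ec'.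
    apply: (proj2 A1); apply: (upper HR HP1 HQ HQ' (properW A1) (properW Q1) (proj2 Q1)).
    by rewrite Ec'.
  apply: (proj2 A2); apply: (contr_ext HR (pr_mod HQ')).
  by rewrite Ec'.
have adj3 := adjX Hg HP2q.
have adj4 := adjX Hg HP1q.
have PXX : forall P, is_prime_ideal R P -> PX R P (fracX 'X).
  by move=> P HP; apply/PXP; split; [apply: CpX|rewrite coefX /=; apply: (pr_0 HP)].
have adj5 : adjacent (ringX R) T (PX R P1) (PX R P2).
  split=> //; split=> //; split.
    split; first by move=> _ [p [Hp [Hp0 ->]]]; apply/PXP; split=> //; apply: S12.
    move=> H; apply: nP1x.
    have : PX R P2 (fracX x%:P).
      by apply/PXP; split; [apply: CpC => //; [apply: (sr0 HR)|apply: HP2R]|rewrite coefC].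
    by move=> /H /PXP [_]; rewrite coefC.
  move=> [Q' [HQ'q [A1 A2]]].
  have HQ' := qp_prime HQ'q; have HQ'm := pr_mod HQ'.
  have QX : Q' (fracX 'X) by apply: (properW A1); apply: PXX.
  have : contr R Q' = P1 \/ contr R Q' = P2.
    apply: between; first exact: contr_prime.
      by rewrite -{1}(contr_PX HR HP1R); apply: contr_sub; apply: properW.
    by rewrite -(contr_PX HR HP2R); apply: contr_sub; apply: properW.
  case=> Ec'.
    apply: (proj2 A1) => z Qz; have [f [Hf Ez]] := pr_sub HQ' Qz.
    rewrite Ez in Qz *; apply/PXP; split=> //.
    by have := proj1 (Xmem HR HQ'm QX Hf) Qz; rewrite Ec'.
  apply: (proj2 A2) => _ [p [Hp [Hp0 ->]]].
  by apply/(Xmem HR HQ'm QX Hp); rewrite Ec'.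
have pr : extX P1 `<` PX R P2.
  split; first by move=> _ [p [Hp ->]]; apply/PXP; split; [apply: Cp_sub HP1R Hp|apply: S12; apply: Hp].
  move=> H; have := H _ (PXX _ HP2) => /extXP /(_ 1%N); rewrite coefX /=; exact: (pr_1 HP1).
pose c := fun i : nat => match i with 0 => extX P1 | 1 => Q | 2 => extX P2 | _ => PX R P2 end.
pose d := fun i : nat => match i with 0 => extX P1 | 1 => PX R P1 | _ => PX R P2 end.
have Hc : sat_chain (ringX R) T c 3 (extX P1) (PX R P2).
  by split=> //; split=> //; case=> [_|[_|[_|//]]].
have Hd : sat_chain (ringX R) T d 2 (extX P1) (PX R P2).
  by split=> //; split=> //; case=> [_|[_|//]].
by have := Hcat qE1 qPX2 pr Hc Hd.
Qed.

End Fixed.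

Lemma strongS_step : strongS R st.
Proof. by move=> P1 P2 [h1 [h2 [h3 h4]]]; apply: ext_adj. Qed.

End Main.

Unset Implicit Arguments.
Local Close Scope classical_set_scope.
Local Close Scope ring_scope.

Lemma goodn (K : fieldType) (D : set K) (st : set K -> set K) :
  is_subring D -> is_semistar D st ->
  forall n, good (Dn D (stilde D st) n) (starn D (stilde D st) n).
Proof.
move=> HD Hst; elim=> [|n IH]; first exact: stilde_good.
exact: (starX_good (starn D (stilde D st) n) (proj1 IH)).
Qed.

Theorem mainTheorem10 (K : fieldType) (D : set K) (st : set K -> set K) :
  is_domain_qf D -> is_semistar D st ->
  univ_catenarian D (stilde D st) -> stably_strongS D (stilde D st).
Proof.
move=> [HD _] Hst Hcat [//|m] _.
have Hc := Hcat m.+2 isT.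
have Hg := goodn K D st HD Hst m.
rewrite /Dn /starn /= in Hc *.
rewrite /Dn /starn in Hg.
exact: (strongS_step Hg Hc).
Qed.
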